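(* Fix $\alpha,\beta\in(0,1)$ and $0<c<1/2$. There exist constants $C_\beta>0$ (depending only on $\beta$) and $K,L>0$ (depending only on $\alpha,\beta,c$) such that for the decoupled process with parameters $(\mathcal{P}_\infty,v_0,\mathcal{P}_\infty,\alpha,\beta)$ and all $t$, with probability at least $1-e^{-(1+o(1))t^{2c}}$ (the $o(1)$ tending to $0$ as $t\to\infty$) there exist indices $k_0<k_1<\dots<k_l$ with $l\ge L\,t^{0.5-c}$ such that the values $\sigma_{k_0}(t),\dots,\sigma_{k_l}(t)$ are pairwise distinct and, for each $i=0,1,\dots,l$, $$\big|\sigma_{k_i}(t)-\beta t-C_\beta\, t^{c}\sqrt{t}\, i\big|\le K\,t^{c}\sqrt{t}.$$
   Context: Decoupled process on the infinite path $\mathcal{P}_\infty$ with vertices $v_0\to v_1\to\cdots$, root $v_0$, $p(v_i)=v_{i-1}$. Fix $\alpha,\beta\in[0,1]$. Let $Z_0=+1$, $Z_1,Z_2,\dots$ i.i.d. uniform on $\{-1,+1\}$, $Z_\infty=\bot$; counter $\mathrm{count}_0=1$; $\mathrm{origin}_0(v_0)=0$ (and always $0$), $\mathrm{origin}_0(v_i)=\infty$ for $i\ge1$; $g_t(v)=Z_{\mathrm{origin}_t(v)}$. Update from $t$ to $t+1$ (independent choices): if $g_t(v)=g_t(p(v))=\bot$ then $\mathrm{origin}_{t+1}(v)=\infty$; if $g_t(v)=\bot\ne g_t(p(v))$: w.p. $1-\alpha$, $\mathrm{origin}_{t+1}(v)=\mathrm{origin}_t(p(v))$, and w.p. $\alpha$,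 $\mathrm{origin}_{t+1}(v)$ is the current counter value and the counter is incremented; if $g_t(v)\ne\bot$, $v\neq v_0$: w.p. $\beta$, $\mathrm{origin}_{t+1}(v)=\mathrm{origin}_t(p(v))$, otherwise unchanged. $k$-frontier: $\sigma_k(t)=\max\{i\in\mathbb{N}:\mathrm{origin}_t(v_i)\le k\}$. *)

(* Defs.v *)
From Stdlib Require Import Reals Lra Lia List Arith ClassicalEpsilon.
Import ListNotations.
Open Scope R_scope.

(* State of the decoupled process on the infinite path P_oo.
   orig i = origin_t(v_i); None encodes the value oo (so g_t(v_i) = bot).
   cnt = current counter value. *)
Record state := mkState { orig : nat -> option nat; cnt : nat }.

Definition init : state :=
  mkState (fun i => match i with O => Some O | S _ => None end) 1%nat.

(* Probability that the coin of vertex v_i comes up "true" in state st: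
   - g(v)=bot, g(p v) <> bot : true = "fresh origin" (prob alpha)
   - g(v) <> bot, v <> v_0   : true = "copy parent"  (prob beta)
   - otherwise the coin is irrelevant and always false. *)
Definition coin_p (alpha beta : R) (st : state) (i : nat) : R :=
  match i with
  | O => 0
  | S j => match orig st i, orig st j with
           | None, None => 0
           | None, Some _ => alpha
           | Some _, _ => beta
           end
  end.

Definition is_new (st : state) (b : nat -> bool) (i : nat) : bool :=
  match i with
  | O => false
  | S j => match orig st i, orig st j with
           | None, Some _ => b i
           | _, _ => false
           end
  end.

Fixpoint count_new (st : state) (b : nat -> bool) (n : nat) : nat :=
  match n with
  | O => O
  | S m => (count_new st b m + if is_new st b m then 1 else 0)%nat
  end.

(* One synchronous update, with the coin of v_i being nth i bs false.
   Fresh counter values are handed out in increasing vertex order. *)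
Definition step (st : state) (bs : list bool) : state :=
  let b i := nth i bs false in
  mkState
    (fun i => match i with
              | O => Some O
              | S j => match orig st i, orig st j with
                       | None, None => None
                       | None, Some o =>
                           if b i then Some (cnt st + count_new st b i)%nat
                           else Some o
                       | Some o, po => if b i then po else Some o
                       end
              end)
    (cnt st + count_new st b (length bs))%nat.

Fixpoint bools (n : nat) : list (list bool) :=
  match n with
  | O => [ [] ]
  | S m => flat_map (fun l => [false :: l; true :: l]) (bools m)
  end.

Fixpoint wprod (f : nat -> bool -> R) (bs : list bool) (i : nat) : R :=
  match bs with
  | [] => 1
  | b :: r => f i b * wprod f r (S i)
  end.

Definition coin_weight (alpha beta : R) (st : state) (bs : list bool) : R :=
  wprod (fun i b => if b then coin_p alpha beta st i
                    else 1 - coin_p alpha beta st i) bs O.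

(* Law of the state at time t, as a finite list of (probability, state).
   From time s to s+1 coins are drawn for v_0..v_{s+1}: at time s only
   v_0..v_s can have a non-bot value, so no other vertex can change. *)
Fixpoint dist (alpha beta : R) (t : nat) : list (R * state) :=
  match t with
  | O => [ (1, init) ]
  | S s => flat_map (fun p =>
             map (fun bs => (fst p * coin_weight alpha beta (snd p) bs,
                             step (snd p) bs))
                 (bools (S (S s))))
             (dist alpha beta s)
  end.

Definition prob (alpha beta : R) (t : nat) (E : state -> Prop) : R :=
  fold_right Rplus 0
    (map (fun p => if excluded_middle_informative (E (snd p)) then fst p else 0)
         (dist alpha beta t)).

(* frontier st k n  <->  n = sigma_k = max { i | origin(v_i) <= k } *)
Definition frontier (st : state) (k n : nat) : Prop :=
  (exists o, orig st n = Some o /\ (o <= k)%nat) /\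
  (forall i o, orig st i = Some o -> (o <= k)%nat -> (i <= n)%nat).

Definition good_event (beta Cb K L c : R) (t : nat) (st : state) : Prop :=
  exists (l : nat) (ks ss : nat -> nat),
    L * Rpower (INR t) (/2 - c) <= INR l /\
    (forall i, (i < l)%nat -> (ks i < ks (S i))%nat) /\
    (forall i, (i <= l)%nat -> frontier st (ks i) (ss i)) /\
    (forall i j, (i <= l)%nat -> (j <= l)%nat -> i <> j -> ss i <> ss j) /\
    (forall i, (i <= l)%nat ->
       Rabs (INR (ss i) - beta * INR t
             - Cb * Rpower (INR t) c * sqrt (INR t) * INR i)
       <= K * Rpower (INR t) c * sqrt (INR t)).

(* Main.v *)
Require Import Defs.
From Stdlib Require Import Reals Lra Lia List Arith ZArith ClassicalEpsilon FunctionalExtensionality.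
Import ListNotations.
Open Scope R_scope.

Definition sumL {A} (l : list A) (f : A -> R) : R := fold_right Rplus 0 (map f l).

Lemma sumL_nil {A} (f : A -> R) : sumL [] f = 0.
Proof. reflexivity. Qed.
Lemma sumL_cons {A} (a : A) l f : sumL (a :: l) f = f a + sumL l f.
Proof. reflexivity. Qed.
Lemma sumL_app {A} (l1 l2 : list A) f : sumL (l1 ++ l2) f = sumL l1 f + sumL l2 f.
Proof. induction l1; simpl; unfold sumL in *; simpl; [lra|]. rewrite IHl1. lra. Qed.
Lemma sumL_flat_map {A B} (g : A -> list B) l f :
  sumL (flat_map g l) f = sumL l (fun a => sumL (g a) f).
Proof. induction l; [reflexivity|]. simpl. rewrite sumL_app, IHl. reflexivity. Qed.
Lemma sumL_map {A B} (g : A -> B) l f : sumL (map g l) f = sumL l (fun a => f (g a)).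
Proof. unfold sumL. rewrite map_map. reflexivity. Qed.
Lemma sumL_ext_in {A} (l : list A) f g : (forall a, In a l -> f a = g a) -> sumL l f = sumL l g.
Proof. induction l; intros H; [reflexivity|]. rewrite !sumL_cons. rewrite H by (left; auto).
  rewrite IHl; auto. intros; apply H; right; auto. Qed.
Lemma sumL_le {A} (l : list A) f g : (forall a, In a l -> f a <= g a) -> sumL l f <= sumL l g.
Proof. induction l; intros H; [unfold sumL; simpl; lra|]. rewrite !sumL_cons.
  apply Rplus_le_compat; [apply H; left; auto| apply IHl; intros; apply H; right; auto]. Qed.
Lemma sumL_plus {A} (l : list A) f g : sumL l (fun a => f a + g a) = sumL l f + sumL l g.
Proof. induction l; [unfold sumL; simpl; lra|]. rewrite !sumL_cons, IHl. lra. Qed.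
Lemma sumL_scal {A} (l : list A) c f : sumL l (fun a => c * f a) = c * sumL l f.
Proof. induction l; [unfold sumL; simpl; lra|]. rewrite !sumL_cons, IHl. lra. Qed.

Lemma bools_length n bs : In bs (bools n) -> length bs = n.
Proof.
  revert bs; induction n; simpl; intros bs H.
  - destruct H as [<-|[]]; reflexivity.
  - apply in_flat_map in H. destruct H as [l [Hl H]].
    simpl in H. destruct H as [<-|[<-|[]]]; simpl; rewrite (IHn l Hl); reflexivity.
Qed.

Lemma sumL_bools_S n f :
  sumL (bools (S n)) f = sumL (bools n) (fun l => f (false :: l) + f (true :: l)).
Proof.
  simpl. rewrite sumL_flat_map. apply sumL_ext_in. intros. unfold sumL; simpl. lra.
Qed.

Section Marg.
Variable f : nat -> bool -> R.
Hypothesis Hf : forall m, f m true + f m false = 1.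

Lemma wprod_mass n i : sumL (bools n) (fun bs => wprod f bs i) = 1.
Proof.
  revert i; induction n; intros i.
  - unfold sumL; simpl. lra.
  - rewrite sumL_bools_S. simpl.
    transitivity (sumL (bools n) (fun l => (f i false + f i true) * wprod f l (S i))).
    + apply sumL_ext_in; intros; lra.
    + rewrite sumL_scal, IHn. rewrite (Rplus_comm (f i false)), Hf. lra.
Qed.

Lemma wprod_marg n i j (phi : bool -> R) :
  sumL (bools n) (fun bs => wprod f bs i * phi (nth j bs false)) =
  if (j <? n)%nat then f (i + j)%nat true * phi true + f (i + j)%nat false * phi false
  else phi false.
Proof.
  revert i j; induction n; intros i j.
  - unfold sumL; simpl. destruct j; simpl; lra.
  - rewrite sumL_bools_S. simpl. destruct j as [|j].
    + transitivity (sumL (bools n) (fun l => (f i false * phi false + f i true * phi true) * wprod f l (S i))).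
      * apply sumL_ext_in; intros; lra.
      * rewrite sumL_scal, wprod_mass. rewrite Nat.add_0_r. simpl. lra.
    + transitivity (sumL (bools n) (fun l => (f i false + f i true) * (wprod f l (S i) * phi (nth j l false)))).
      * apply sumL_ext_in; intros; lra.
      * rewrite sumL_scal, IHn. rewrite (Rplus_comm (f i false)), Hf.
        replace (i + S j)%nat with (S i + j)%nat by lia.
        replace (S j <? S n)%nat with (j <? n)%nat by reflexivity. lra.
Qed.
End Marg.

Lemma exp_pow a n : exp a ^ n = exp (INR n * a).
Proof.
  induction n; simpl.
  - rewrite Rmult_0_l, exp_0. reflexivity.
  - rewrite IHn. rewrite <- exp_plus. f_equal. destruct n; simpl; ring.
Qed.

Lemma exp_quad l : -1/2 <= l <= 1/2 -> exp l <= 1 + l + 2 * l ^ 2.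
Proof.
  intros H. pose proof (exp_ineq1_le (- l)) as H1.
  assert (H2 : exp l * exp (- l) = 1) by (rewrite <- exp_plus; replace (l + - l) with 0 by ring; apply exp_0).
  pose proof (exp_pos l). pose proof (exp_pos (-l)).
  assert (H5 : exp l * (1 - l) <= 1) by nra.
  nra.
Qed.

Lemma q_bound b l : 0 <= b <= 1 -> -1/2 <= l <= 1/2 ->
  b * exp l + 1 - b <= exp (b * l + 2 * l ^ 2).
Proof.
  intros Hb Hl. pose proof (exp_quad l Hl). pose proof (exp_ineq1_le (b * l + 2 * l ^ 2)).
  assert (b * exp l <= b * (1 + l + 2 * l ^ 2)) by (apply Rmult_le_compat_l; lra).
  assert (b * (2 * l^2) <= 2 * l^2) by (assert (0 <= l^2) by nra; nra).
  lra.
Qed.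
Definition Inv (u : nat) (st : state) : Prop :=
  orig st 0 = Some 0%nat /\
  (forall i, orig st i = None <-> (u < i)%nat) /\
  (forall i j o1 o2, (i <= j)%nat -> orig st i = Some o1 -> orig st j = Some o2 -> (o1 <= o2)%nat) /\
  (forall i o, orig st i = Some o -> (o < cnt st)%nat).

Lemma Inv_init : Inv 0 init.
Proof.
  split; [reflexivity|]. split; [|split].
  - intros [|i]; simpl; split; intros H; try discriminate; try lia; auto.
  - intros [|i] [|j] o1 o2 Hij H1 H2; simpl in *; try discriminate; try lia.
    inversion H1; subst; lia.
  - intros [|i] o H; simpl in *; inversion H; lia.
Qed.

Section StepLemmas.
Variables (u : nat) (st : state) (bs : list bool).
Hypothesis HI : Inv u st.
Hypothesis Hlen : length bs = S (S u).
Let b i := nth i bs false.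

Lemma Inv_some i : (i <= u)%nat -> exists o, orig st i = Some o.
Proof.
  intros H. destruct HI as [_ [H2 _]]. destruct (orig st i) eqn:E; eauto.
  apply H2 in E. lia.
Qed.

Lemma Inv_none i : (u < i)%nat -> orig st i = None.
Proof. intros H. destruct HI as [_ [H2 _]]. apply H2; auto. Qed.

Lemma is_new_in i : (i <= u)%nat -> is_new st b i = false.
Proof.
  intros H. destruct i; [reflexivity|]. simpl. destruct (Inv_some (S i) H) as [o ->]. reflexivity.
Qed.

Lemma count_new_low n : (n <= S u)%nat -> count_new st b n = 0%nat.
Proof.
  induction n; intros H; [reflexivity|]. simpl. rewrite IHn by lia. rewrite is_new_in by lia. reflexivity.
Qed.

Lemma count_new_top : count_new st b (S (S u)) = (if b (S u) then 1 else 0)%nat.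
Proof.
  simpl. rewrite count_new_low by lia. rewrite is_new_in by lia. simpl.
  rewrite (Inv_none (S u)) by lia. destruct (Inv_some u (le_n u)) as [o ->]. reflexivity.
Qed.

Lemma so_0 : orig (step st bs) 0 = Some 0%nat.
Proof. reflexivity. Qed.

Lemma so_in i : (1 <= i <= u)%nat ->
  orig (step st bs) i = if b i then orig st (i - 1) else orig st i.
Proof.
  intros H. destruct i as [|j]; [lia|]. unfold b. simpl.
  destruct (Inv_some (S j) ltac:(lia)) as [o E]. rewrite E. rewrite Nat.sub_0_r.
  destruct (nth (S j) bs false); reflexivity.
Qed.

Lemma so_front ou : orig st u = Some ou ->
  orig (step st bs) (S u) = Some (if b (S u) then cnt st else ou).
Proof.
  intros E. simpl. rewrite (Inv_none (S u)) by lia. rewrite E.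
  unfold b. destruct (nth (S u) bs false); [|reflexivity].
  rewrite count_new_low by lia. rewrite is_new_in by lia. f_equal; lia.
Qed.

Lemma so_out i : (S u < i)%nat -> orig (step st bs) i = None.
Proof.
  intros H. destruct i as [|j]; [lia|]. simpl. rewrite !Inv_none by lia. reflexivity.
Qed.

Lemma cnt_step : cnt (step st bs) = (cnt st + if b (S u) then 1 else 0)%nat.
Proof. change (cnt (step st bs)) with (cnt st + count_new st b (length bs))%nat.
  rewrite Hlen. rewrite count_new_top. reflexivity. Qed.

Lemma Inv_step : Inv (S u) (step st bs).
Proof.
  destruct HI as [I1 [I2 [I3 I4]]].
  destruct (Inv_some u (le_n u)) as [ou Eu].
  assert (Hou : (ou < cnt st)%nat) by eauto.
  assert (Hval : forall i o, (1 <= i <= u)%nat -> orig (step st bs) i = Some o ->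
            exists o1 o2, orig st (i-1) = Some o1 /\ orig st i = Some o2 /\ (o1 <= o)%nat /\ (o <= o2)%nat).
  { intros i o Hi E. rewrite so_in in E by auto.
    destruct (Inv_some (i-1) ltac:(lia)) as [o1 E1]. destruct (Inv_some i ltac:(lia)) as [o2 E2].
    assert (o1 <= o2)%nat by (apply (I3 (i-1)%nat i); auto; lia).
    exists o1, o2. repeat split; auto; destruct (b i); rewrite ?E1, ?E2 in E; inversion E; subst; lia. }
  split; [reflexivity|]. split; [|split].
  - intros i. split; intros H.
    + destruct (le_lt_dec i (S u)) as [Hi|Hi]; auto. exfalso.
      destruct i as [|i]; [rewrite so_0 in H; discriminate|].
      destruct (Nat.eq_dec i u) as [->|Hne].
      * rewrite (so_front ou Eu) in H. discriminate.
      * rewrite so_in in H by lia. destruct (Inv_some (S i - 1) ltac:(lia)) as [? E1].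
        destruct (Inv_some (S i) ltac:(lia)) as [? E2]. destruct (b (S i)); congruence.
    + apply so_out; auto.
  - intros i j o1 o2 Hij H1 H2.
    destruct (Nat.eq_dec i 0) as [->|Hi0]; [rewrite so_0 in H1; inversion H1; lia|].
    destruct (le_lt_dec j u) as [Hj|Hj].
    + destruct (Hval i o1 ltac:(lia) H1) as [a1 [a2 [_ [E2 [_ L2]]]]].
      destruct (Hval j o2 ltac:(lia) H2) as [c1 [c2 [E3 [_ [L3 _]]]]].
      destruct (Nat.eq_dec i j) as [->|Hne]; [rewrite H1 in H2; inversion H2; lia|].
      assert (a2 <= c1)%nat by (apply (I3 i (j-1)%nat); auto; lia). lia.
    + destruct (Nat.eq_dec j (S u)) as [->|Hne]; [|rewrite so_out in H2 by lia; discriminate].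
      destruct (Nat.eq_dec i (S u)) as [->|Hne2]; [rewrite H1 in H2; inversion H2; lia|].
      rewrite (so_front ou Eu) in H2. inversion H2; subst.
      assert (o1 <= ou)%nat.
      { destruct (Hval i o1 ltac:(lia) H1) as [a1 [a2 [_ [E2 [_ L2]]]]].
        assert (a2 <= ou)%nat by (apply (I3 i u); auto; lia). lia. }
      destruct (b (S u)); lia.
  - intros i o H. rewrite cnt_step.
    destruct (Nat.eq_dec i 0) as [->|Hi0]; [rewrite so_0 in H; inversion H; subst; lia|].
    destruct (le_lt_dec i u) as [Hi|Hi].
    + destruct (Hval i o ltac:(lia) H) as [a1 [a2 [_ [E2 [_ L2]]]]].
      assert (a2 < cnt st)%nat by eauto. lia.
    + destruct (Nat.eq_dec i (S u)) as [->|Hne]; [|rewrite so_out in H by lia; discriminate].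
      rewrite (so_front ou Eu) in H. inversion H; subst. unfold b. destruct (nth (S u) bs false); lia.
Qed.

End StepLemmas.



Lemma Inv_some' u st i : Inv u st -> (i <= u)%nat -> exists o, orig st i = Some o.
Proof.
  intros HI H. destruct HI as [_ [H2 _]]. destruct (orig st i) eqn:E; eauto.
  apply H2 in E. lia.
Qed.
Definition leb_opt (o : option nat) (k : nat) : bool :=
  match o with Some o => (o <=? k)%nat | None => false end.

Fixpoint sigf (st : state) (k n : nat) : nat :=
  match n with
  | O => O
  | S m => if leb_opt (orig st (S m)) k then S m else sigf st k m
  end.

Definition Pk st k i := leb_opt (orig st i) k = true.

Lemma sigf_le st k n : (sigf st k n <= n)%nat.
Proof. induction n; simpl; [lia|]. destruct leb_opt; lia. Qed.

Lemma sigf_P st k n : sigf st k n = 0%nat \/ Pk st k (sigf st k n).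
Proof. induction n; simpl; auto. unfold Pk. destruct leb_opt eqn:E; auto. Qed.

Lemma sigf_max st k n i : (sigf st k n < i <= n)%nat -> ~ Pk st k i.
Proof.
  induction n; simpl; intros H; [lia|]. unfold Pk in *.
  destruct (leb_opt (orig st (S n)) k) eqn:E; [lia|].
  destruct (Nat.eq_dec i (S n)) as [->|Hne]; [rewrite E; discriminate|]. apply IHn. lia.
Qed.

Lemma Pk_0 u st k : Inv u st -> Pk st k 0.
Proof. intros [H _]. unfold Pk. rewrite H. simpl. reflexivity. Qed.

Lemma Pk_iff st k i : Pk st k i <-> exists o, orig st i = Some o /\ (o <= k)%nat.
Proof.
  unfold Pk, leb_opt. destruct (orig st i); split; intros H.
  - exists n; split; auto. apply Nat.leb_le; auto.
  - destruct H as [o [E H]]. inversion E; subst. apply Nat.leb_le; auto.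
  - discriminate.
  - destruct H as [o [E _]]; discriminate.
Qed.

Lemma Pk_down u st k i j : Inv u st -> (i <= j)%nat -> Pk st k j -> Pk st k i.
Proof.
  intros HI Hij Hj. apply Pk_iff in Hj. destruct Hj as [o [E Ho]].
  destruct HI as [I1 [I2 [I3 I4]]].
  destruct (orig st i) eqn:Ei.
  - apply Pk_iff. exists n; split; auto. pose proof (I3 i j n o Hij Ei E). lia.
  - apply I2 in Ei. assert (orig st j = None) by (apply I2; lia). congruence.
Qed.

Lemma sigf_char u st k x : Inv u st -> (x <= u)%nat -> Pk st k x ->
  ((x < u)%nat -> ~ Pk st k (S x)) -> sigf st k u = x.
Proof.
  intros HI Hx Px Nx.
  destruct (lt_eq_lt_dec (sigf st k u) x) as [[Hlt|Heq]|Hgt]; auto.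
  - exfalso. apply (sigf_max st k u x (conj Hlt Hx)); auto.
  - exfalso. destruct (sigf_P st k u) as [H0|HP]; [lia|].
    apply Nx; [pose proof (sigf_le st k u); lia|]. apply (Pk_down u st k (S x) (sigf st k u)); auto.
Qed.

Lemma sigf_Pk u st k : Inv u st -> Pk st k (sigf st k u).
Proof. intros HI. destruct (sigf_P st k u) as [H|H]; auto. rewrite H. eapply Pk_0; eauto. Qed.

Lemma sigf_frontier u st k : Inv u st -> frontier st k (sigf st k u).
Proof.
  intros HI. split.
  - apply Pk_iff. eapply sigf_Pk; eauto.
  - intros i o E Ho. destruct (le_lt_dec i (sigf st k u)) as [H|H]; auto. exfalso.
    assert (i <= u)%nat.
    { destruct HI as [_ [I2 _]]. destruct (le_lt_dec i u); auto.
      assert (orig st i = None) by (apply I2; lia). congruence. }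
    apply (sigf_max st k u i); [lia|]. apply Pk_iff; eauto.
Qed.

Lemma sigf_mono_k u st k k' : Inv u st -> (k <= k')%nat -> (sigf st k u <= sigf st k' u)%nat.
Proof.
  intros HI Hk. destruct (le_lt_dec (sigf st k u) (sigf st k' u)) as [H|H]; auto. exfalso.
  apply (sigf_max st k' u (sigf st k u)); [split; auto; apply sigf_le|].
  pose proof (sigf_Pk u st k HI) as P. apply Pk_iff in P. apply Pk_iff.
  destruct P as [o [E Ho]]. exists o; split; auto; lia.
Qed.

Lemma sigf_top u st : Inv u st -> sigf st (cnt st - 1) u = u.
Proof.
  intros HI. apply sigf_char; auto; [| intros; lia].
  apply Pk_iff. destruct (Inv_some' u st u HI (le_n u)) as [o E]. exists o; split; auto.
  destruct HI as [_ [_ [_ I4]]]. pose proof (I4 u o E). lia.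
Qed.

Section SigStep.
Variables (u : nat) (st : state) (bs : list bool) (k : nat).
Hypothesis HI : Inv u st.
Hypothesis Hlen : length bs = S (S u).
Hypothesis Hk : (k < cnt st)%nat.
Let b i := nth i bs false.
Let x := sigf st k u.
Let st' := step st bs.

Lemma HI' : Inv (S u) st'.
Proof. apply Inv_step; auto. Qed.

Lemma Pk_in_step i : (1 <= i <= u)%nat -> Pk st k (i - 1) -> Pk st k i -> Pk st' k i.
Proof.
  intros Hi P1 P2. unfold Pk. unfold st'. rewrite (so_in u st bs HI Hlen) by auto.
  destruct (nth i bs false); auto.
Qed.

Lemma NPk_in_step i : (1 <= i <= u)%nat -> ~ Pk st k (i - 1) -> ~ Pk st k i -> ~ Pk st' k i.
Proof.
  intros Hi P1 P2. unfold Pk. unfold st'. rewrite (so_in u st bs HI Hlen) by auto.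
  destruct (nth i bs false); auto.
Qed.

Lemma x_le : (x <= u)%nat.
Proof. apply sigf_le. Qed.

Lemma Px : Pk st k x.
Proof. eapply sigf_Pk; eauto. Qed.

Lemma Pk_front : Pk st k u -> Pk st' k (S u) <-> b (S u) = false.
Proof.
  intros Pu. destruct (Inv_some' u st u HI (le_n u)) as [ou E].
  unfold Pk, st'. rewrite (so_front u st bs HI Hlen ou E). unfold b.
  apply Pk_iff in Pu. destruct Pu as [o [E' Ho]]. rewrite E in E'. inversion E'; subst.
  destruct (nth (S u) bs false); simpl; split; intros H; auto; try discriminate.
  - apply Nat.leb_le in H. lia.
  - apply Nat.leb_le. lia.
Qed.

Lemma NPk_front : ~ Pk st k u -> ~ Pk st' k (S u).
Proof.
  intros Nu. destruct (Inv_some' u st u HI (le_n u)) as [ou E].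
  unfold Pk, st'. rewrite (so_front u st bs HI Hlen ou E). unfold b.
  destruct (nth (S u) bs false); simpl; intros H; apply Nat.leb_le in H; [lia|].
  apply Nu. apply Pk_iff. eauto.
Qed.

Lemma sig_step_lt : (x < u)%nat -> sigf st' k (S u) = if b (S x) then S x else x.
Proof.
  intros Hx.
  assert (NP : forall j, (x < j <= u)%nat -> ~ Pk st k j) by (intros; apply (sigf_max st k u); auto).
  pose proof Px as Px.
  destruct (b (S x)) eqn:Eb.
  - apply sigf_char; [apply HI'|lia| |].
    + unfold Pk, st'. rewrite (so_in u st bs HI Hlen) by lia. fold (b (S x)). rewrite Eb.
      replace (S x - 1)%nat with x by lia. apply Px.
    + intros _. destruct (Nat.eq_dec (S x) u) as [He|Hne].
      * rewrite He. apply NPk_front. apply NP; lia.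
      * apply NPk_in_step; [lia| replace (S (S x) - 1)%nat with (S x) by lia; apply NP; lia| apply NP; lia].
  - apply sigf_char; [apply HI'|lia| |].
    + destruct (Nat.eq_dec x 0) as [H0|H0]; [rewrite H0; eapply Pk_0; apply HI'|].
      apply Pk_in_step; [lia| apply (Pk_down u st k _ x); auto; lia| auto].
    + intros _. unfold Pk, st'. rewrite (so_in u st bs HI Hlen) by lia. fold (b (S x)). rewrite Eb.
      apply NP; lia.
Qed.

Lemma sig_step_eq : x = u -> sigf st' k (S u) = if b (S u) then u else S u.
Proof.
  intros Hx. pose proof Px as Px. rewrite Hx in Px.
  destruct (b (S u)) eqn:Eb.
  - apply sigf_char; [apply HI'|lia| |].
    + destruct (Nat.eq_dec u 0) as [H0|H0]; [rewrite H0; eapply Pk_0; apply HI'|].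
      apply Pk_in_step; [lia| apply (Pk_down u st k _ u); auto; lia| auto].
    + intros _ H. apply (Pk_front Px) in H. congruence.
  - apply sigf_char; [apply HI'|lia| |].
    + apply (Pk_front Px). auto.
    + intros; lia.
Qed.

End SigStep.

Lemma Rabs_le_inv' a b : Rabs a <= b -> - b <= a <= b.
Proof. intros H. pose proof (Rle_abs a). pose proof (Rle_abs (- a)). rewrite Rabs_Ropp in *. lra. Qed.

Lemma good_of_windows beta Cb K L c t st l : Inv t st ->
  0 < Rpower (INR t) c * sqrt (INR t) -> 2 * K < Cb -> 0 < K ->
  L * Rpower (INR t) (/2 - c) <= INR l ->
  (forall i, (i <= l)%nat -> exists k,
     Rabs (INR (sigf st k t) - beta * INR t - Cb * Rpower (INR t) c * sqrt (INR t) * INR i)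
       <= K * Rpower (INR t) c * sqrt (INR t)) ->
  good_event beta Cb K L c t st.
Proof.
  intros HI HS HCK HK HL HW.
  set (SS := Rpower (INR t) c * sqrt (INR t)) in *.
  set (Pw := fun i k => Rabs (INR (sigf st k t) - beta * INR t - Cb * Rpower (INR t) c * sqrt (INR t) * INR i)
       <= K * Rpower (INR t) c * sqrt (INR t)).
  set (ks := fun i => epsilon (inhabits 0%nat) (Pw i)).
  assert (Hks : forall i, (i <= l)%nat -> Pw i (ks i)).
  { intros i Hi. unfold ks. apply epsilon_spec. apply HW; auto. }
  assert (Hb : forall i, (i <= l)%nat ->
     beta * INR t + Cb * SS * INR i - K * SS <= INR (sigf st (ks i) t) <= beta * INR t + Cb * SS * INR i + K * SS).
  { intros i Hi. pose proof (Hks i Hi) as H. unfold Pw in H.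
    unfold SS. apply Rabs_le_inv' in H. lra. }
  assert (Hlt : forall i j, (i < j)%nat -> (j <= l)%nat -> (sigf st (ks i) t < sigf st (ks j) t)%nat).
  { intros i j Hij Hj. apply INR_lt.
    pose proof (Hb i ltac:(lia)). pose proof (Hb j Hj).
    assert (INR i + 1 <= INR j) by (rewrite <- S_INR; apply le_INR; lia).
    assert (Cb * SS * INR i + Cb * SS <= Cb * SS * INR j).
    { assert (0 < Cb * SS) by (apply Rmult_lt_0_compat; lra). nra. }
    assert (2 * K * SS < Cb * SS) by (apply Rmult_lt_compat_r; lra). lra. }
  exists l, ks, (fun i => sigf st (ks i) t). split; [auto|]. split; [|split; [|split]].
  - intros i Hi. destruct (le_lt_dec (ks (S i)) (ks i)) as [H|H]; auto.
    exfalso. pose proof (sigf_mono_k t st _ _ HI H). pose proof (Hlt i (S i) ltac:(lia) ltac:(lia)). lia.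
  - intros i Hi. apply (sigf_frontier t). auto.
  - intros i j Hi Hj Hij. destruct (lt_eq_lt_dec i j) as [[H|H]|H]; [|contradiction|].
    + pose proof (Hlt i j H Hj). lia.
    + pose proof (Hlt j i H Hi). lia.
  - intros i Hi. apply (Hks i Hi).
Qed.

Lemma Rpower_ge1 x e : 1 <= x -> 0 <= e -> 1 <= Rpower x e.
Proof. intros Hx He. rewrite <- (Rpower_O x) at 1 by lra. apply Rle_Rpower; auto. Qed.

Lemma pw_facts (tR c : R) : 1 <= tR -> 0 < c < /2 ->
  let Sg := Rpower tR c * sqrt tR in
  let T := Rpower tR (2 * c) in
  let U := Rpower tR (/2 - c) in
  Sg * U = tR /\ T * U = Sg /\ 1 <= T /\ 1 <= U /\ 1 <= Sg.
Proof.
  intros Ht Hc Sg T U.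
  assert (HSg : Sg = Rpower tR (c + /2)).
  { unfold Sg. rewrite <- Rpower_sqrt by lra. rewrite Rpower_plus. reflexivity. }
  assert (E1 : Sg * U = tR).
  { rewrite HSg. unfold U. rewrite <- Rpower_plus. replace (c + /2 + (/2 - c)) with 1 by field.
    apply Rpower_1; lra. }
  assert (E2 : T * U = Sg).
  { rewrite HSg. unfold T, U. rewrite <- Rpower_plus. f_equal. field. }
  split; auto. split; auto.
  split; [apply Rpower_ge1; lra|]. split; [apply Rpower_ge1; lra|].
  rewrite HSg; apply Rpower_ge1; lra.
Qed.

Lemma nat_above (x : R) : exists n : nat, x <= INR n.
Proof.
  destruct (archimed x) as [H1 H2].
  exists (Z.to_nat (up x)). destruct (Z_le_gt_dec 0 (up x)) as [Hz|Hz].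
  - rewrite INR_IZR_INZ. rewrite Z2Nat.id by auto. lra.
  - replace (Z.to_nat (up x)) with 0%nat by lia. simpl. apply Z.gt_lt in Hz. apply IZR_lt in Hz. simpl in Hz. lra.
Qed.

Lemma nat_between (x : R) : 0 <= x -> exists n : nat, x <= INR n <= x + 1.
Proof.
  intros Hx. destruct (archimed x) as [H1 H2].
  assert (Hz : (0 <= up x)%Z) by (apply le_IZR; simpl; lra).
  exists (Z.to_nat (up x)). rewrite INR_IZR_INZ. rewrite Z2Nat.id by auto. lra.
Qed.

Lemma nat_floor (x : R) : 0 <= x -> exists n : nat, INR n <= x < INR n + 1.
Proof.
  intros Hx. destruct (archimed x) as [H1 H2].
  assert (Hz : (1 <= up x)%Z).
  { assert (0 < IZR (up x)) by lra. apply lt_IZR in H. lia. }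
  exists (Z.to_nat (up x - 1)). rewrite INR_IZR_INZ. rewrite Z2Nat.id by lia.
  rewrite minus_IZR. simpl. lra.
Qed.

Lemma exp_ge_pow (T : R) (N : nat) : 0 <= T -> (1 <= N)%nat -> (T / INR N) ^ N <= exp T.
Proof.
  intros HT HN. assert (HNR : 1 <= INR N) by (apply (le_INR 1); auto).
  replace T with (INR N * (T / INR N)) at 2 by (field; lra).
  rewrite <- exp_pow. apply pow_incr. split.
  - unfold Rdiv. apply Rmult_le_pos; [lra|]. left; apply Rinv_0_lt_compat; lra.
  - pose proof (exp_ineq1_le (T / INR N)). lra.
Qed.

Lemma asymp (alpha beta c : R) : 0 < alpha < 1 -> 0 < beta < 1 -> 0 < c < /2 ->
  exists N0 : nat, forall t : nat, (N0 <= t)%nat ->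
    let tR := INR t in
    let Sg := Rpower tR c * sqrt tR in
    let T := Rpower tR (2 * c) in
    let U := Rpower tR (/2 - c) in
    1 <= tR /\
    2 * T / alpha + 2 <= Sg /\
    tR / 4 + 11 * Sg / (1 - beta) + 2 * T / alpha + 2 + 2 * Sg <= tR /\
    3 * (U + 2) <= exp T.
Proof.
  intros Ha Hb Hc.
  destruct (nat_above (/ (2 * c))) as [N1 HN1].
  set (N := S N1).
  assert (HNR : 1 <= INR N) by (unfold N; rewrite S_INR; pose proof (pos_INR N1); lra).
  assert (HN2c : 1 <= 2 * c * INR N).
  { unfold N. rewrite S_INR. assert (/ (2 * c) * (2 * c) = 1) by (field; lra).
    assert (0 < 2 * c) by lra. nra. }
  set (A := 11 / (1 - beta) + 2 + 2 / alpha).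
  assert (HA : 0 < A).
  { unfold A. assert (0 < 11 / (1 - beta)) by (apply Rdiv_lt_0_compat; lra).
    assert (0 < 2 / alpha) by (apply Rdiv_lt_0_compat; lra). lra. }
  set (NN := INR N ^ N).
  assert (HNN : 1 <= NN) by (unfold NN; apply pow_R1_Rle; lra).
  assert (Ha2 : 0 < 2 / alpha) by (apply Rdiv_lt_0_compat; lra).
  set (M := 2 / alpha + 2 + (2 * A + 4) + (3 * NN + 2)).
  assert (HM : 1 <= M) by (unfold M; lra).
  destruct (nat_above (Rmax 1 (Rpower M (/ (/2 - c))))) as [N0 HN0].
  exists N0. intros t Ht tR Sg T U.
  assert (HtR : Rmax 1 (Rpower M (/ (/2 - c))) <= tR).
  { apply Rle_trans with (INR N0); auto. apply le_INR; auto. }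
  assert (Ht1 : 1 <= tR) by (eapply Rle_trans; [apply Rmax_l|]; eauto).
  assert (HU : M <= U).
  { assert (Rpower M (/ (/2 - c)) <= tR) by (eapply Rle_trans; [apply Rmax_r|]; eauto).
    unfold U. replace M with (Rpower (Rpower M (/ (/2 - c))) (/2 - c)) at 1.
    - apply Rle_Rpower_l; [lra|]. split; auto. apply exp_pos.
    - rewrite Rpower_mult. replace (/ (/ 2 - c) * (/ 2 - c)) with 1 by (field; lra). apply Rpower_1; lra. }
  destruct (pw_facts tR c Ht1 Hc) as [E1 [E2 [HT1 [HU1 HS1]]]].
  fold Sg T U in E1, E2, HT1, HU1, HS1.
  split; auto. split; [|split].
  - assert (2 / alpha + 2 <= U) by (unfold M in HU; lra).
    assert (2 * T / alpha = T * (2 / alpha)) by (field; lra). rewrite H0. rewrite <- E2. nra.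
  - assert (2 * A + 4 <= U) by (unfold M in HU; lra).
    assert (HTS : T <= Sg) by (rewrite <- E2; nra).
    assert (11 * Sg / (1 - beta) + 2 * T / alpha + 2 * Sg + 2 <= (A + 2) * Sg).
    { assert (2 * T / alpha <= 2 / alpha * Sg).
      { replace (2 * T / alpha) with (2 / alpha * T) by (field; lra). apply Rmult_le_compat_l; lra. }
      unfold A. replace (11 * Sg / (1 - beta)) with (11 / (1 - beta) * Sg) by (field; lra). nra. }
    assert ((A + 2) * Sg <= 3 / 4 * tR) by (rewrite <- E1; nra). lra.
  - assert (3 * NN + 2 <= U) by (unfold M in HU; lra).
    assert (HTN : tR <= T ^ N).
    { rewrite <- Rpower_pow by lra. unfold T. rewrite Rpower_mult.
      rewrite <- (Rpower_1 tR) at 1 by lra. apply Rle_Rpower; lra. }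
    pose proof (exp_ge_pow T N ltac:(lra) ltac:(unfold N; lia)) as HE.
    assert (HE2 : (T / INR N) ^ N = T ^ N / NN) by (unfold NN; rewrite Rpow_mult_distr || idtac; unfold Rdiv; rewrite Rpow_mult_distr, pow_inv; reflexivity).
    assert (HSU : U <= Sg) by (rewrite <- E2; nra).
    assert (HUU : U * U <= tR) by (rewrite <- E1; nra).
    assert (3 * (U + 2) * NN <= U * U) by nra.
    assert (3 * (U + 2) <= T ^ N / NN).
    { apply Rmult_le_reg_r with NN; [lra|]. replace (T ^ N / NN * NN) with (T ^ N) by (field; lra). lra. }
    lra.
Qed.
Section Chain.
Variables alpha beta : R.
Hypothesis Ha : 0 <= alpha <= 1.
Hypothesis Hb : 0 <= beta <= 1.

Definition cf (st : state) (i : nat) (b : bool) : R :=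
  if b then coin_p alpha beta st i else 1 - coin_p alpha beta st i.

Lemma cf_sum st m : cf st m true + cf st m false = 1.
Proof. unfold cf; lra. Qed.

Lemma coin_p_bounds st i : 0 <= coin_p alpha beta st i <= 1.
Proof. unfold coin_p. destruct i; [lra|]. destruct (orig st (S i)), (orig st i); lra. Qed.

Lemma wprod_nonneg (g : nat -> bool -> R) bs i : (forall m b, 0 <= g m b) -> 0 <= wprod g bs i.
Proof. revert i; induction bs; intros i H; simpl; [lra|]. apply Rmult_le_pos; auto. Qed.

Lemma cw_nonneg st bs : 0 <= coin_weight alpha beta st bs.
Proof. unfold coin_weight. apply wprod_nonneg. intros m b. destruct b; pose proof (coin_p_bounds st m); lra. Qed.

Definition OS (u : nat) (st : state) (g : state -> R) : R :=
  sumL (bools (S (S u))) (fun bs => coin_weight alpha beta st bs * g (step st bs)).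

Fixpoint Ev (st : state) (u n : nat) (g : state -> R) : R :=
  match n with
  | O => g st
  | S m => Ev st u m (fun s => OS (u + m) s g)
  end.

Definition EL (l : list (R * state)) (g : state -> R) := sumL l (fun p => fst p * g (snd p)).

Lemma EL_dist t g : EL (Defs.dist alpha beta t) g = Ev init 0 t g.
Proof.
  revert g; induction t; intros g.
  - unfold EL, sumL; simpl. lra.
  - simpl. unfold EL. rewrite sumL_flat_map.
    rewrite <- IHt. unfold EL. apply sumL_ext_in. intros p _.
    rewrite sumL_map. simpl. unfold OS. rewrite <- sumL_scal.
    apply sumL_ext_in. intros. lra.
Qed.

Definition ind (P : Prop) : R := if excluded_middle_informative P then 1 else 0.

Lemma prob_Ev t E : prob alpha beta t E = Ev init 0 t (fun s => ind (E s)).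
Proof.
  rewrite <- EL_dist. unfold prob, EL, sumL. f_equal. apply map_ext. intros [w s]. simpl.
  unfold ind. destruct excluded_middle_informative; lra.
Qed.

Lemma OS_const u st c : OS u st (fun _ => c) = c.
Proof.
  unfold OS. rewrite (sumL_ext_in _ _ (fun bs => c * wprod (cf st) bs 0)).
  - rewrite sumL_scal. rewrite wprod_mass; [lra|]. apply cf_sum.
  - intros. unfold coin_weight, cf. lra.
Qed.

Lemma OS_lin u st a b g h : OS u st (fun s => a * g s + b * h s) = a * OS u st g + b * OS u st h.
Proof.
  unfold OS. rewrite <- !sumL_scal, <- sumL_plus. apply sumL_ext_in; intros; lra.
Qed.

Lemma Ev_lin st u n a b g h :
  Ev st u n (fun s => a * g s + b * h s) = a * Ev st u n g + b * Ev st u n h.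
Proof.
  revert g h; induction n; intros g h; simpl; [reflexivity|].
  rewrite <- IHn. f_equal. apply functional_extensionality. intros s. apply OS_lin.
Qed.

Lemma Ev_const st u n c : Ev st u n (fun _ => c) = c.
Proof.
  induction n; simpl; [reflexivity|].
  rewrite (functional_extensionality (fun s => OS (u + n) s (fun _ => c)) (fun _ => c)); auto.
  intros s. apply OS_const.
Qed.

Lemma Ev_comp st u m n g : Ev st u (m + n) g = Ev st u m (fun s => Ev s (u + m) n g).
Proof.
  revert g; induction n; intros g.
  - rewrite Nat.add_0_r. simpl. reflexivity.
  - rewrite Nat.add_succ_r. simpl. rewrite IHn. rewrite Nat.add_assoc. reflexivity.
Qed.

Definition Pres (P : nat -> state -> Prop) :=
  forall u s bs, P u s -> In bs (bools (S (S u))) -> P (S u) (step s bs).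

Lemma OS_mono P u s g h : Pres P -> P u s -> (forall s', P (S u) s' -> g s' <= h s') ->
  OS u s g <= OS u s h.
Proof.
  intros HP Hs H. unfold OS. apply sumL_le. intros bs Hbs.
  apply Rmult_le_compat_l; [apply cw_nonneg|]. apply H. apply HP; auto.
Qed.

Lemma Ev_mono P st u n g h : Pres P -> P u st ->
  (forall s, P (u + n)%nat s -> g s <= h s) -> Ev st u n g <= Ev st u n h.
Proof.
  intros HP; revert g h; induction n; intros g h Hst H; simpl.
  - apply H. rewrite Nat.add_0_r. auto.
  - apply IHn; auto. intros s Hs. apply (OS_mono P); auto.
    intros s' Hs'. apply H. rewrite Nat.add_succ_r. auto.
Qed.

Lemma Pres_True : Pres (fun _ _ => True).
Proof. intros ? ? ? ? ?; auto. Qed.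

Lemma Ev_mono0 st u n g h : (forall s, g s <= h s) -> Ev st u n g <= Ev st u n h.
Proof. intros H. apply (Ev_mono (fun _ _ => True)); auto. apply Pres_True. Qed.

Lemma Ev_sum st u n (g : nat -> state -> R) l :
  Ev st u n (fun s => sum_f_R0 (fun i => g i s) l) = sum_f_R0 (fun i => Ev st u n (g i)) l.
Proof.
  induction l; simpl.
  - reflexivity.
  - rewrite <- IHl.
    transitivity (Ev st u n (fun s => 1 * sum_f_R0 (fun i => g i s) l + 1 * g (S l) s)).
    + f_equal. apply functional_extensionality; intros; lra.
    + rewrite Ev_lin. lra.
Qed.



Lemma Pres_Inv : Pres Inv.
Proof. intros u s bs H Hbs. apply Inv_step; auto. apply bools_length; auto. Qed.

Lemma coin_p_some st j o : orig st (S j) = Some o -> coin_p alpha beta st (S j) = beta.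
Proof. intros E. unfold coin_p. rewrite E. reflexivity. Qed.

Lemma OS_sig_lt u st k (phi : nat -> R) : Inv u st -> (k < cnt st)%nat ->
  (sigf st k u < u)%nat ->
  OS u st (fun s => phi (sigf s k (S u))) =
  beta * phi (S (sigf st k u)) + (1 - beta) * phi (sigf st k u).
Proof.
  intros HI Hk Hx. set (x := sigf st k u) in *. unfold OS.
  rewrite (sumL_ext_in _ _ (fun bs => wprod (cf st) bs 0 *
           (fun b : bool => phi (if b then S x else x)) (nth (S x) bs false))).
  - rewrite (wprod_marg (cf st) (cf_sum st) _ 0 (S x) (fun b : bool => phi (if b then S x else x))).
    replace (S x <? S (S u))%nat with true by (symmetry; apply Nat.ltb_lt; lia).
    simpl. unfold cf. destruct (Inv_some' u st (S x) HI ltac:(lia)) as [o E].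
    rewrite E. lra.
  - intros bs Hbs. apply bools_length in Hbs.
    unfold x. rewrite (sig_step_lt u st bs k HI Hbs Hk Hx). reflexivity.
Qed.

Lemma OS_sig_eq u st k (phi : nat -> R) : Inv u st -> (k < cnt st)%nat ->
  sigf st k u = u ->
  OS u st (fun s => phi (sigf s k (S u))) = alpha * phi u + (1 - alpha) * phi (S u).
Proof.
  intros HI Hk Hx. unfold OS.
  rewrite (sumL_ext_in _ _ (fun bs => wprod (cf st) bs 0 *
           (fun b : bool => phi (if b then u else S u)) (nth (S u) bs false))).
  - rewrite (wprod_marg (cf st) (cf_sum st) _ 0 (S u) (fun b : bool => phi (if b then u else S u))).
    replace (S u <? S (S u))%nat with true by (symmetry; apply Nat.ltb_lt; lia).
    simpl. unfold cf. destruct (Inv_some' u st u HI (le_n u)) as [o E].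
    assert (EN: orig st (S u) = None) by (destruct HI as [_ [I2 _]]; apply I2; lia).
    unfold coin_p. rewrite EN, E. lra.
  - intros bs Hbs. apply bools_length in Hbs.
    rewrite (sig_step_eq u st bs k HI Hbs Hk Hx). reflexivity.
Qed.

Lemma cnt_mono u st bs : Inv u st -> In bs (bools (S (S u))) -> (cnt st <= cnt (step st bs))%nat.
Proof.
  intros HI Hbs. apply bools_length in Hbs. rewrite (cnt_step u st bs HI Hbs). lia.
Qed.

Lemma sig_step_bounds u st bs k : Inv u st -> In bs (bools (S (S u))) -> (k < cnt st)%nat ->
  (sigf st k u <= sigf (step st bs) k (S u) <= S (sigf st k u))%nat /\
  ((sigf st k u < u)%nat -> (sigf (step st bs) k (S u) < S u)%nat).
Proof.
  intros HI Hbs Hk. apply bools_length in Hbs.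
  pose proof (sigf_le st k u).
  destruct (Nat.eq_dec (sigf st k u) u) as [He|Hne].
  - rewrite (sig_step_eq u st bs k HI Hbs Hk He). rewrite He. destruct (nth (S u) bs false); split; lia.
  - rewrite (sig_step_lt u st bs k HI Hbs Hk) by lia. destruct (nth (S (sigf st k u)) bs false); split; lia.
Qed.

Lemma Ev_scal st u n a g : Ev st u n (fun s => a * g s) = a * Ev st u n g.
Proof.
  transitivity (Ev st u n (fun s => a * g s + 0 * g s)).
  - f_equal. apply functional_extensionality; intros; lra.
  - rewrite Ev_lin. lra.
Qed.

Lemma Ev_plus st u n g h : Ev st u n (fun s => g s + h s) = Ev st u n g + Ev st u n h.
Proof.
  transitivity (Ev st u n (fun s => 1 * g s + 1 * h s)).
  - f_equal. apply functional_extensionality; intros; lra.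
  - rewrite Ev_lin. lra.
Qed.

Definition P1k k (u : nat) (s : state) := Inv u s /\ (k < cnt s)%nat.

Lemma Pres_P1k k : Pres (P1k k).
Proof.
  intros u s bs [HI Hk] Hbs. split; [apply Pres_Inv; auto|].
  pose proof (cnt_mono u s bs HI Hbs). lia.
Qed.

Lemma ind_le1 P : ind P <= 1.
Proof. unfold ind; destruct excluded_middle_informative; lra. Qed.
Lemma ind_ge0 P : 0 <= ind P.
Proof. unfold ind; destruct excluded_middle_informative; lra. Qed.

Lemma phase1 k st u m : Inv u st -> (k < cnt st)%nat ->
  Ev st u m (fun s => ind (sigf s k (u + m) = (u + m)%nat)) <= (1 - alpha) ^ m.
Proof.
  intros HI Hk. induction m.
  - simpl. apply ind_le1.
  - simpl Ev. rewrite Nat.add_succ_r.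
    apply Rle_trans with (Ev st u m (fun s => (1 - alpha) * ind (sigf s k (u + m) = (u + m)%nat))).
    + apply (Ev_mono (P1k k)); [apply Pres_P1k| split; auto|].
      intros s [HIs Hks]. apply Req_le.
      destruct (Nat.eq_dec (sigf s k (u + m)) (u + m)) as [He|Hne].
      * rewrite (OS_sig_eq _ _ k (fun y => ind (y = S (u + m))) HIs Hks He).
        unfold ind. rewrite He. do 3 destruct excluded_middle_informative; try lia; try lra.
      * pose proof (sigf_le s k (u + m)).
        rewrite (OS_sig_lt _ _ k (fun y => ind (y = S (u + m))) HIs Hks ltac:(lia)).
        unfold ind. do 3 destruct excluded_middle_informative; try lia; try lra.
    + rewrite Ev_scal. simpl. apply Rmult_le_compat_l; [lra|]. auto.
Qed.

Definition Pw k (u : nat) (s : state) := Inv u s /\ (k < cnt s)%nat /\ (sigf s k u < u)%nat.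

Lemma Pres_Pw k : Pres (Pw k).
Proof.
  intros u s bs [HI [Hk Hx]] Hbs. split; [apply Pres_Inv; auto|].
  pose proof (cnt_mono u s bs HI Hbs). split; [lia|].
  apply (sig_step_bounds u s bs k HI Hbs Hk). auto.
Qed.

Lemma walk_mgf k st u n lam : Pw k u st ->
  Ev st u n (fun s => exp (lam * INR (sigf s k (u + n)))) <=
  exp (lam * INR (sigf st k u)) * (beta * exp lam + 1 - beta) ^ n.
Proof.
  intros HP. assert (Hq : 0 <= beta * exp lam + 1 - beta).
  { pose proof (exp_pos lam). nra. }
  induction n.
  - simpl. rewrite Nat.add_0_r. lra.
  - simpl Ev. rewrite Nat.add_succ_r.
    apply Rle_trans with (Ev st u n (fun s => (beta * exp lam + 1 - beta) * exp (lam * INR (sigf s k (u + n))))).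
    + apply (Ev_mono (Pw k)); [apply Pres_Pw| auto|].
      intros s [HIs [Hks Hxs]]. apply Req_le.
      rewrite (OS_sig_lt _ _ k (fun y => exp (lam * INR y)) HIs Hks Hxs).
      rewrite S_INR, Rmult_plus_distr_l, Rmult_1_r, exp_plus. lra.
    + rewrite Ev_scal. simpl pow.
      apply Rle_trans with ((beta * exp lam + 1 - beta) * (exp (lam * INR (sigf st k u)) * (beta * exp lam + 1 - beta) ^ n)).
      * apply Rmult_le_compat_l; auto.
      * right; ring.
Qed.

Lemma walk_tail k st v n r lo hi : Pw k v st -> (0 < n)%nat -> 0 < r <= 2 * INR n ->
  lo <= INR (sigf st k v) + beta * INR n - r ->
  INR (sigf st k v) + beta * INR n + r <= hi ->
  Ev st v n (fun s => ind (~ (lo <= INR (sigf s k (v + n)) <= hi))) <= 2 * exp (- (r ^ 2 / (8 * INR n))).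
Proof.
  intros HP Hn Hr Hlo Hhi.
  assert (HnR : 0 < INR n) by (apply lt_0_INR; auto).
  set (x := INR (sigf st k v)) in *. set (a := x + beta * INR n).
  set (lam := r / (4 * INR n)).
  assert (Hlam : 0 < lam <= 1/2).
  { unfold lam. split; [apply Rdiv_lt_0_compat; lra|]. apply Rmult_le_reg_r with (4 * INR n); [lra|].
    unfold Rdiv. rewrite Rmult_assoc, Rinv_l by lra. lra. }
  apply Rle_trans with (Ev st v n (fun s => exp (- (lam * (a + r))) * exp (lam * INR (sigf s k (v + n)))
                                      + exp (lam * (a - r)) * exp (- lam * INR (sigf s k (v + n))))).
  - apply Ev_mono0. intros s. set (y := INR (sigf s k (v + n))).
    pose proof (exp_pos (- (lam * (a + r)))) as X1. pose proof (exp_pos (lam * y)) as X2.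
    pose proof (exp_pos (lam * (a - r))) as X3. pose proof (exp_pos (- lam * y)) as X4.
    pose proof (Rmult_lt_0_compat _ _ X1 X2). pose proof (Rmult_lt_0_compat _ _ X3 X4).
    unfold ind. destruct excluded_middle_informative as [Hin|Hin]; [|lra].
    apply Classical_Prop.not_and_or in Hin. destruct Hin as [Hin|Hin].
    + assert (1 <= exp (lam * (a - r)) * exp (- lam * y)); [|lra].
      rewrite <- exp_plus. rewrite <- exp_0.
      destruct (Rle_lt_dec 0 (lam * (a - r) + - lam * y)) as [Hp|Hp].
      * destruct Hp as [Hp|Hp]; [left; apply exp_increasing; auto| rewrite Hp; right; reflexivity].
      * exfalso. apply Rnot_le_lt in Hin. assert (y < a - r) by (unfold a, x in *; lra). nra.
    + assert (1 <= exp (- (lam * (a + r))) * exp (lam * y)); [|lra].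
      rewrite <- exp_plus. rewrite <- exp_0.
      destruct (Rle_lt_dec 0 (- (lam * (a + r)) + lam * y)) as [Hp|Hp].
      * destruct Hp as [Hp|Hp]; [left; apply exp_increasing; auto| rewrite Hp; right; reflexivity].
      * exfalso. apply Rnot_le_lt in Hin. assert (a + r < y) by (unfold a, x in *; lra). nra.
  - rewrite Ev_plus, !Ev_scal.
    pose proof (walk_mgf k st v n lam HP) as W1. pose proof (walk_mgf k st v n (- lam) HP) as W2.
    fold x in W1, W2.
    assert (Q1 : (beta * exp lam + 1 - beta) ^ n <= exp (INR n * (beta * lam + 2 * lam ^ 2))).
    { rewrite <- exp_pow. apply pow_incr. split; [pose proof (exp_pos lam); nra|]. apply q_bound; lra. }
    assert (Q2 : (beta * exp (- lam) + 1 - beta) ^ n <= exp (INR n * (beta * (- lam) + 2 * (- lam) ^ 2))).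
    { rewrite <- exp_pow. apply pow_incr. split; [pose proof (exp_pos (- lam)); nra|]. apply q_bound; lra. }
    assert (E1 : exp (- (lam * (a + r))) * Ev st v n (fun s => exp (lam * INR (sigf s k (v + n))))
                 <= exp (- (r ^ 2 / (8 * INR n)))).
    { apply Rle_trans with (exp (- (lam * (a + r))) * (exp (lam * x) * exp (INR n * (beta * lam + 2 * lam ^ 2)))).
      - apply Rmult_le_compat_l; [left; apply exp_pos|]. eapply Rle_trans; [apply W1|].
        apply Rmult_le_compat_l; [left; apply exp_pos| auto].
      - rewrite <- !exp_plus. right. f_equal. unfold a, lam. field. lra. }
    assert (E2 : exp (lam * (a - r)) * Ev st v n (fun s => exp (- lam * INR (sigf s k (v + n))))
                 <= exp (- (r ^ 2 / (8 * INR n)))).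
    { apply Rle_trans with (exp (lam * (a - r)) * (exp (- lam * x) * exp (INR n * (beta * (- lam) + 2 * (- lam) ^ 2)))).
      - apply Rmult_le_compat_l; [left; apply exp_pos|]. eapply Rle_trans; [apply W2|].
        apply Rmult_le_compat_l; [left; apply exp_pos| auto].
      - rewrite <- !exp_plus. right. f_equal. unfold a, lam. field. lra. }
    lra.
Qed.

Definition Qk k tau (u : nat) (s : state) := Inv u s /\ (k < cnt s)%nat /\ (tau <= sigf s k u)%nat.

Lemma Pres_Qk k tau : Pres (Qk k tau).
Proof.
  intros u s bs [HI [Hk Hx]] Hbs. split; [apply Pres_Inv; auto|].
  pose proof (cnt_mono u s bs HI Hbs). split; [lia|].
  pose proof (sig_step_bounds u s bs k HI Hbs Hk). lia.
Qed.

Lemma cnt_pos u s : Inv u s -> (1 <= cnt s)%nat.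
Proof. intros [I1 [_ [_ I4]]]. pose proof (I4 0%nat 0%nat I1). lia. Qed.

Lemma window_bound tau delta n lo hi r : (0 < n)%nat -> 0 < r <= 2 * INR n ->
  lo <= INR tau + beta * INR n - r -> INR tau + INR delta + beta * INR n + r <= hi ->
  Ev init 0 (tau + (delta + n))
     (fun s => ind (~ exists k, lo <= INR (sigf s k (tau + (delta + n))) <= hi))
  <= (1 - alpha) ^ delta + 2 * exp (- (r ^ 2 / (8 * INR n))).
Proof.
  intros Hn Hr Hlo Hhi. set (B := (1 - alpha) ^ delta + 2 * exp (- (r ^ 2 / (8 * INR n)))).
  rewrite Ev_comp. simpl (0 + tau)%nat.
  apply Rle_trans with (Ev init 0 tau (fun _ => B)); [|rewrite Ev_const; lra].
  apply (Ev_mono Inv); [apply Pres_Inv| apply Inv_init|]. intros s HI. simpl in HI.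
  set (k := (cnt s - 1)%nat).
  pose proof (cnt_pos _ _ HI) as Hc.
  apply Rle_trans with (Ev s tau (delta + n)
      (fun s' => ind (~ (lo <= INR (sigf s' k (tau + (delta + n))) <= hi)))).
  { apply Ev_mono0. intros s'. unfold ind.
    do 2 destruct excluded_middle_informative; try lra; exfalso; firstorder. }
  rewrite Nat.add_assoc. rewrite Ev_comp.
  apply Rle_trans with (Ev s tau delta (fun s' => ind (sigf s' k (tau + delta) = (tau + delta)%nat)
                                            + 2 * exp (- (r ^ 2 / (8 * INR n))))).
  - apply (Ev_mono (Qk k tau)); [apply Pres_Qk| |].
    + split; auto. split; [unfold k; lia|]. unfold k. rewrite (sigf_top _ _ HI). lia.
    + intros s' [HI' [Hk' Hx']].
      pose proof (sigf_le s' k (tau + delta)).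
      destruct (Nat.eq_dec (sigf s' k (tau + delta)) (tau + delta)) as [He|Hne].
      * apply Rle_trans with 1.
        { apply Rle_trans with (Ev s' (tau + delta) n (fun _ => 1)); [apply Ev_mono0; intros; apply ind_le1|].
          rewrite Ev_const; lra. }
        unfold ind at 1. destruct excluded_middle_informative; [|contradiction].
        pose proof (exp_pos (- (r ^ 2 / (8 * INR n)))). lra.
      * apply Rle_trans with (2 * exp (- (r ^ 2 / (8 * INR n)))).
        { apply walk_tail; auto.
          - split; auto. split; auto. lia.
          - apply Rle_trans with (INR tau + beta * INR n - r); auto.
            apply le_INR in Hx'. lra.
          - apply Rle_trans with (INR tau + INR delta + beta * INR n + r); auto.
            assert (INR (sigf s' k (tau + delta)) <= INR tau + INR delta) by (rewrite <- plus_INR; apply le_INR; lia).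
            lra. }
        pose proof (ind_ge0 (sigf s' k (tau + delta) = (tau + delta)%nat)). lra.
  - rewrite Ev_plus, Ev_const. unfold B. apply Rplus_le_compat_r. apply phase1; auto. unfold k; lia.
Qed.
End Chain.

Lemma window_bound' alpha beta (Ha : 0 <= alpha <= 1) (Hb : 0 <= beta <= 1) t tau delta n lo hi r : t = (tau + (delta + n))%nat ->
  (0 < n)%nat -> 0 < r <= 2 * INR n ->
  lo <= INR tau + beta * INR n - r -> INR tau + INR delta + beta * INR n + r <= hi ->
  Ev alpha beta init 0 t (fun s => ind (~ exists k, lo <= INR (sigf s k t) <= hi))
  <= (1 - alpha) ^ delta + 2 * exp (- (r ^ 2 / (8 * INR n))).
Proof. intros ->. apply window_bound; auto. Qed.

Lemma exp_le_mono x y : x <= y -> exp x <= exp y.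
Proof. intros [H|H]; [left; apply exp_increasing; auto| rewrite H; right; reflexivity]. Qed.

Lemma sum_nonneg (f : nat -> R) l : (forall j, 0 <= f j) -> 0 <= sum_f_R0 f l.
Proof. intros Hf. induction l; simpl; [apply Hf|]. pose proof (Hf (S l)). lra. Qed.

Lemma sum_ge_term (f : nat -> R) l i : (forall j, 0 <= f j) -> (i <= l)%nat -> f i <= sum_f_R0 f l.
Proof.
  intros Hf; induction l; intros Hi.
  - replace i with 0%nat by lia. simpl. lra.
  - simpl. destruct (Nat.eq_dec i (S l)) as [->|Hne].
    + pose proof (sum_nonneg f l Hf). lra.
    + pose proof (IHl ltac:(lia)). pose proof (Hf (S l)). lra.
Qed.

Lemma Ev_ind_compl alpha beta t (P : state -> Prop) :
  Ev alpha beta init 0 t (fun s => ind (P s)) = 1 - Ev alpha beta init 0 t (fun s => ind (~ P s)).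
Proof.
  assert (H : Ev alpha beta init 0 t (fun s => ind (P s) + ind (~ P s)) = 1).
  { rewrite (functional_extensionality (fun s => ind (P s) + ind (~ P s)) (fun _ => 1)).
    - apply Ev_const.
    - intros s. unfold ind. do 2 destruct excluded_middle_informative; try lra; tauto. }
  rewrite Ev_plus in H. lra.
Qed.

Lemma main_bound alpha beta c t : 0 < alpha < 1 -> 0 < beta < 1 -> 0 < c < /2 ->
    let tR := INR t in
    let Sg := Rpower tR c * sqrt tR in
    let T := Rpower tR (2 * c) in
    let U := Rpower tR (/2 - c) in
    1 <= tR ->
    2 * T / alpha + 2 <= Sg ->
    tR / 4 + 11 * Sg / (1 - beta) + 2 * T / alpha + 2 + 2 * Sg <= tR ->
    3 * (U + 2) <= exp T ->
  prob alpha beta t (good_event beta 11 5 ((1 - beta) / 44) c t) >= 1 - exp (- (1 + 0) * T).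
Proof.
  intros Ha Hb Hc tR Sg T U Ht1 C1 C2 C3.
  assert (Ha' : 0 <= alpha <= 1) by lra. assert (Hb' : 0 <= beta <= 1) by lra.
  destruct (pw_facts tR c Ht1 Hc) as [E1 [E2 [HT1 [HU1 HS1]]]].
  fold Sg T U in E1, E2, HT1, HU1, HS1.
  set (L := (1 - beta) / 44).
  assert (HL : 0 < L < 1) by (unfold L; split; [apply Rdiv_lt_0_compat|]; lra).
  destruct (nat_between (L * U) ltac:(nra)) as [l Hl].
  assert (HTa : 0 <= 2 * T / alpha) by (apply Rmult_le_pos; [lra| left; apply Rinv_0_lt_compat; lra]).
  destruct (nat_between (2 * T / alpha) HTa) as [delta Hd].
  assert (HdT : 2 * T <= alpha * INR delta).
  { destruct Hd as [Hd _]. apply Rmult_le_compat_l with (r := alpha) in Hd; [|lra].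
    replace (alpha * (2 * T / alpha)) with (2 * T) in Hd by (field; lra). lra. }
  set (lo := fun i : nat => beta * tR + 11 * Sg * INR i - 5 * Sg).
  set (hi := fun i : nat => beta * tR + 11 * Sg * INR i + 5 * Sg).
  set (Fail := fun i s => ~ exists k, lo i <= INR (sigf s k t) <= hi i).
  assert (HW : forall i, (i <= l)%nat ->
     Ev alpha beta init 0 t (fun s => ind (Fail i s)) <= 3 * exp (- (2 * T))).
  { intros i Hi.
    assert (HX : 0 <= 11 * Sg * INR i / (1 - beta)).
    { apply Rmult_le_pos; [pose proof (pos_INR i); nra| left; apply Rinv_0_lt_compat; lra]. }
    destruct (nat_floor _ HX) as [tau Htau].
    assert (Ht1' : (1 - beta) * INR tau <= 11 * Sg * INR i).
    { destruct Htau as [H _]. apply Rmult_le_compat_l with (r := 1 - beta) in H; [|lra].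
      replace ((1 - beta) * (11 * Sg * INR i / (1 - beta))) with (11 * Sg * INR i) in H by (field; lra). lra. }
    assert (Ht2 : 11 * Sg * INR i < (1 - beta) * INR tau + (1 - beta)).
    { destruct Htau as [_ H]. apply Rmult_lt_compat_l with (r := 1 - beta) in H; [|lra].
      replace ((1 - beta) * (11 * Sg * INR i / (1 - beta))) with (11 * Sg * INR i) in H by (field; lra). lra. }
    assert (Hil : INR i <= L * U + 1) by (apply Rle_trans with (INR l); [apply le_INR; auto| lra]).
    assert (Htau_b : INR tau <= tR / 4 + 11 * Sg / (1 - beta)).
    { assert (11 * Sg * INR i <= 11 * Sg * (L * U + 1)) by (apply Rmult_le_compat_l; lra).
      assert (11 * Sg * (L * U + 1) = (1 - beta) * (tR / 4 + 11 * Sg / (1 - beta))).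
      { rewrite <- E1. unfold L. field. lra. }
      apply Rmult_le_reg_l with (1 - beta); lra. }
    assert (Hsum : INR tau + INR delta + 2 * Sg + 1 <= tR) by lra.
    assert (Hle : (tau + delta <= t)%nat).
    { apply INR_le. rewrite plus_INR. unfold tR in Hsum. lra. }
    set (n := (t - (tau + delta))%nat).
    assert (Hn : INR n = tR - INR tau - INR delta).
    { unfold n. rewrite minus_INR by auto. rewrite plus_INR. unfold tR. lra. }
    assert (Hn0 : (0 < n)%nat) by (apply INR_lt; simpl; lra).
    apply Rle_trans with ((1 - alpha) ^ delta + 2 * exp (- ((4 * Sg) ^ 2 / (8 * INR n)))).
    - apply (window_bound' alpha beta Ha' Hb' t tau delta n (lo i) (hi i) (4 * Sg)).
      + unfold n. lia.
      + auto.
      + lra.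
      + unfold lo. rewrite Hn. nra.
      + unfold hi. rewrite Hn. nra.
    - assert (P1 : (1 - alpha) ^ delta <= exp (- (2 * T))).
      { apply Rle_trans with (exp (- alpha) ^ delta).
        - apply pow_incr. split; [lra|]. pose proof (exp_ineq1_le (- alpha)). lra.
        - rewrite exp_pow. apply exp_le_mono. lra. }
      assert (P2 : exp (- ((4 * Sg) ^ 2 / (8 * INR n))) <= exp (- (2 * T))).
      { apply exp_le_mono. apply Ropp_le_contravar.
        assert (HnR : 0 < INR n) by (apply lt_0_INR; auto).
        replace ((4 * Sg) ^ 2 / (8 * INR n)) with (2 * (Sg * Sg) / INR n) by (field; lra).
        apply Rmult_le_reg_r with (INR n); auto.
        replace (2 * (Sg * Sg) / INR n * INR n) with (2 * (Sg * Sg)) by (field; lra).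
        assert (Sg * Sg = T * tR) by (rewrite <- E2 at 1; rewrite <- E1; ring).
        assert (INR n <= tR) by (rewrite Hn; pose proof (pos_INR tau); pose proof (pos_INR delta); lra).
        nra. }
      lra. }
  rewrite prob_Ev. rewrite Ev_ind_compl.
  assert (Key : Ev alpha beta init 0 t (fun s => ind (~ good_event beta 11 5 L c t s)) <= exp (- T)).
  { apply Rle_trans with (Ev alpha beta init 0 t (fun s => sum_f_R0 (fun i => ind (Fail i s)) l)).
    - apply (Ev_mono alpha beta Ha' Hb' Inv); [apply Pres_Inv| apply Inv_init|].
      intros s HI. simpl in HI.
      unfold ind at 1. destruct excluded_middle_informative as [Hng|Hg].
      + assert (exists i, (i <= l)%nat /\ Fail i s).
        { apply NNPP. intros Hno. apply Hng.
          apply (good_of_windows beta 11 5 L c t s l HI); try lra.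
          - apply Rmult_lt_0_compat; [apply exp_pos|]. apply sqrt_lt_R0. unfold tR in Ht1; lra.
          - unfold L, U, tR in *. lra.
          - intros i Hi. apply NNPP. intros Hk. apply Hno. exists i. split; auto.
            intros [k Hk2]. apply Hk. exists k. apply Rabs_le. unfold lo, hi, Sg, tR in Hk2. lra. }
        destruct H as [i [Hi Hf]].
        apply Rle_trans with (ind (Fail i s)).
        * unfold ind. destruct excluded_middle_informative; [lra| contradiction].
        * apply (sum_ge_term (fun i => ind (Fail i s))); auto. intros; apply ind_ge0.
      + apply Rle_trans with (sum_f_R0 (fun _ => 0) l).
        * rewrite sum_cte. lra.
        * apply sum_Rle. intros; apply ind_ge0.
    - rewrite Ev_sum. apply Rle_trans with (sum_f_R0 (fun _ => 3 * exp (- (2 * T))) l).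
      + apply sum_Rle. intros i Hi. apply HW. auto.
      + rewrite sum_cte. rewrite S_INR.
        assert (INR l + 1 <= U + 2) by nra.
        assert (exp T * exp (- (2 * T)) = exp (- T)) by (rewrite <- exp_plus; f_equal; ring).
        pose proof (exp_pos (- (2 * T))). nra. }
  replace (- (1 + 0) * T) with (- T) by ring. lra.
Qed.

Theorem mainTheorem7 (beta : R) (hbeta : 0 < beta < 1) :
  exists Cb : R, 0 < Cb /\
  forall (alpha c : R), 0 < alpha < 1 -> 0 < c < /2 ->
  exists K L : R, 0 < K /\ 0 < L /\
  exists eps : nat -> R, Un_cv eps 0 /\
  forall t : nat, (1 <= t)%nat ->
    prob alpha beta t (good_event beta Cb K L c t)
      >= 1 - exp (- (1 + eps t) * Rpower (INR t) (2 * c)).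
Proof.
  exists 11. split; [lra|]. intros alpha c Ha Hc.
  exists 5, ((1 - beta) / 44). split; [lra|]. split; [apply Rdiv_lt_0_compat; lra|].
  destruct (asymp alpha beta c Ha hbeta Hc) as [N0 HN0].
  exists (fun t => if (t <? N0)%nat then -1 else 0). split.
  - intros e He. exists N0. intros n Hn. replace (n <? N0)%nat with false by (symmetry; apply Nat.ltb_ge; lia).
    unfold R_dist. rewrite Rminus_0_r, Rabs_R0. lra.
  - intros t Ht. destruct (t <? N0)%nat eqn:E.
    + replace (- (1 + -1) * Rpower (INR t) (2 * c)) with 0 by ring. rewrite exp_0.
      rewrite prob_Ev. apply Rle_ge.
      apply Rle_trans with (Ev alpha beta init 0 t (fun _ => 0)); [rewrite Ev_const; lra|].
      apply Ev_mono0; [lra|lra|]. intros; apply ind_ge0.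
    + apply Nat.ltb_ge in E. destruct (HN0 t E) as [H1 [H2 [H3 H4]]].
      apply main_bound; auto.
Qed.
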